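(* Let $(D^n,\omega_h^n)_{n\in\mathbb N}$ be a solution of the discrete linearized scheme described in the context, with discrete free energy $\mathcal E^n$. Then for all $n\ge0$, $$ \frac{\mathcal E^{n+1}-\mathcal E^n}{\Delta t}+\Delta t\,\mathcal R_h^n=-\frac{1}{\varepsilon\tau_0}\sum_{k=1}^{N_H}k\,\|D^{n+1}_k\|_{l^2(\mathbb T)}^2, $$ where $$ \mathcal R_h^n=\frac12\Big(\Big\|\frac{D^{n+1}-D^n}{\Delta t}\Big\|_{l^2}^2+\Big\|\frac{\mathcal A_h(\omega_h^{n+1}-\omega_h^n)}{\Delta t\,\sqrt{\rho}_\infty}\Big\|_{l^2(\mathbb T)}^2\Big)\ge0 . $$
   Context: Discrete setting. Fix $T_0>0$, $\varepsilon>0$, $\tau_0>0$, a time step $\Delta t>0$, an integer $N_H\ge1$, and an interval $(a,b)$ with periodic boundary conditions (a torus $\mathbb T$). Take a mesh $a=x_{1/2}<x_1<x_{3/2}<\dots<x_{N_x}<x_{N_x+1/2}=b$, cells $K_j=(x_{j-1/2},x_{j+1/2})$, $\Delta x_j=x_{j+1/2}-x_{j-1/2}$, $j\in\mathcal J=\{1,\dots,N_x\}$; cell indices are understood periodically modulo $N_x$. For grid functions $D=(D_j)_{j\in\mathcal J}$, $G=(G_j)_{j\in\mathcal J}$ set $\langle D,G\rangle_{l^2(\mathbb T)}=\sum_{j\in\mathcal J}\Delta x_j D_jG_j$ and $\|D\|_{l^2(\mathbb T)}^2=\langle D,D\rangle_{l^2(\mathbb T)}$; products and quotients of grid functions are taken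 componentwise. $(\rho_{\infty,j})_{j\in\mathcal J}$ are positive numbers (approximations of the equilibrium density), and $\sqrt{\rho}_\infty$ denotes the grid function $(\sqrt{\rho_{\infty,j}})_j$. Define $E_{\infty,j}=\frac{2T_0}{\sqrt{\rho_{\infty,j}}}\,\frac{\sqrt{\rho_{\infty,j+1}}-\sqrt{\rho_{\infty,j-1}}}{2\Delta x_j}$ and the discrete operators $$ (\mathcal A_hD)_j=\sqrt{T_0}\,\frac{D_{j+1}-D_{j-1}}{2\Delta x_j}-\frac{E_{\infty,j}}{2\sqrt{T_0}}D_j,\qquad (\mathcal A_h^\star D)_j=-\sqrt{T_0}\,\frac{D_{j+1}-D_{j-1}}{2\Delta x_j}-\frac{E_{\infty,j}}{2\sqrt{T_0}}D_j , $$ which are adjoint with respect to $\langle\cdot,\cdot\rangle_{l^2(\mathbb T)}$. Discrete linearized scheme: $D^n=(D^n_k)_{0\le k\le N_H}$, each $D^n_k$ a grid function, and grid functions $\omega^n_h$, satisfy for all $n\ge0$ $$ \varepsilon\frac{D^{n+1}_1-D^n_1}{\Delta t}+\mathcal A_hD^{n+1}_0-\sqrt2\,\mathcal A_h^\star D^{n+1}_2+\mathcal A_h\omega_h^{n+1}=-\frac1{\tau_0}D^{n+1}_1, $$ $$ \varepsilon\frac{D^{n+1}_k-D^n_k}{\Delta t}+\sqrt k\,\mathcal A_hD^{n+1}_{k-1}-\sqrt{k+1}\,\mathcal A_h^\star D^{n+1}_{k+1}=-\frac{k}{\tau_0}D^{n+1}_k,\quad k\in\{0,\dots,N_H\}\setminus\{1\},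 $$ with the convention $D^{n+1}_{-1}=D^{n+1}_{N_H+1}=0$, and for all $n\ge0$ (including $n=0$ for $\omega_h^0$) $$ \mathcal A_h^\star\big(\rho_\infty^{-1}\mathcal A_h\omega_h^{n}\big)=D^{n}_0-\sqrt{\rho}_\infty,\qquad \sum_{j\in\mathcal J}\Delta x_j\,\omega^{n}_{h,j}\,\rho_{\infty,j}^{-1/2}=0 . $$ Discrete equilibrium: $D_{\infty,0}=\sqrt{\rho}_\infty$, $D_{\infty,k}=0$ for $1\le k\le N_H$. Discrete free energy: $$ \mathcal E^n=\frac12\Big(\|D^n-D_\infty\|_{l^2}^2+\Big\|\frac{\mathcal A_h\omega_h^n}{\sqrt{\rho}_\infty}\Big\|_{l^2(\mathbb T)}^2\Big),\qquad \|D\|_{l^2}^2=\sum_{k=0}^{N_H}\|D_k\|_{l^2(\mathbb T)}^2 . $$ *)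

(* Defs.v *)
From HB Require Import structures.
From mathcomp Require Import all_boot all_order all_algebra.
Set Implicit Arguments. Unset Strict Implicit. Unset Printing Implicit Defensive.
Import Order.TTheory GRing.Theory Num.Theory.
Local Open Scope ring_scope.

Section Discrete.
Variables (R : rcfType) (Nx : nat).

(* grid functions on the cells K_j, j in 'I_Nx (0-based); periodic shifts *)
Definition grid := 'I_Nx -> R.
Definition jnext (j : 'I_Nx) : 'I_Nx := ordS j.
Definition jprev (j : 'I_Nx) : 'I_Nx := ord_pred j.

Definition dotT (dx : grid) (D G : grid) : R := \sum_(j < Nx) dx j * D j * G j.
Definition normT2 (dx : grid) (D : grid) : R := dotT dx D D.

Definition Einf (T0 : R) (dx rho : grid) (j : 'I_Nx) : R :=
  (2 * T0) / Num.sqrt (rho j) *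
  ((Num.sqrt (rho (jnext j)) - Num.sqrt (rho (jprev j))) / (2 * dx j)).

Definition Ah (T0 : R) (dx rho : grid) (D : grid) : grid := fun j =>
  Num.sqrt T0 * ((D (jnext j) - D (jprev j)) / (2 * dx j))
  - Einf T0 dx rho j / (2 * Num.sqrt T0) * D j.

Definition Ahstar (T0 : R) (dx rho : grid) (D : grid) : grid := fun j =>
  - (Num.sqrt T0 * ((D (jnext j) - D (jprev j)) / (2 * dx j)))
  - Einf T0 dx rho j / (2 * Num.sqrt T0) * D j.

Definition gsub (D G : grid) : grid := fun j => D j - G j.
Definition gscale (c : R) (D : grid) : grid := fun j => c * D j.
Definition gdiv (D G : grid) : grid := fun j => D j / G j.
Definition gsqrt (D : grid) : grid := fun j => Num.sqrt (D j).

Definition Dinf (rho : grid) (k : nat) : grid :=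
  if k == 0%N then gsqrt rho else fun _ => 0.

(* discrete free energy; D : nat (time) -> nat (Hermite index k) -> grid *)
Definition energy (T0 : R) (NH : nat) (dx rho : grid)
  (D : nat -> nat -> grid) (om : nat -> grid) (n : nat) : R :=
  1 / 2 * (\sum_(k < NH.+1) normT2 dx (gsub (D n k) (Dinf rho k))
           + normT2 dx (gdiv (Ah T0 dx rho (om n)) (gsqrt rho))).

Definition Rh (T0 dt : R) (NH : nat) (dx rho : grid)
  (D : nat -> nat -> grid) (om : nat -> grid) (n : nat) : R :=
  1 / 2 * (\sum_(k < NH.+1) normT2 dx (gscale dt^-1 (gsub (D n.+1 k) (D n k)))
           + normT2 dx (gdiv (Ah T0 dx rho (gsub (om n.+1) (om n)))
                             (gscale dt (gsqrt rho)))).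

End Discrete.

(* Main.v *)
Require Import Defs.
From HB Require Import structures.
From mathcomp Require Import all_boot all_order all_algebra.
From mathcomp Require Import ring lra.
Import Order.TTheory GRing.Theory Num.Theory.
Local Open Scope ring_scope.

Section H.
Variables (R : rcfType) (Nx : nat) (T0 : R) (dx rho : 'I_Nx -> R).
Hypothesis hdx : forall j, 0 < dx j.
Hypothesis hrho : forall j, 0 < rho j.
Hypothesis hT0 : 0 < T0.

Lemma sqT0_neq0 : Num.sqrt T0 != 0.
Proof. by rewrite sqrtr_eq0 -ltNge hT0. Qed.

Lemma shiftS (F G : 'I_Nx -> R) :
  \sum_j F (jnext j) * G j = \sum_j F j * G (jprev j).
Proof.
rewrite (reindex_inj (@ord_pred_inj Nx)) /=.
by apply: eq_bigr => j _; rewrite /jnext /jprev ord_predK.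
Qed.

Lemma shiftP (F G : 'I_Nx -> R) :
  \sum_j F (jprev j) * G j = \sum_j F j * G (jnext j).
Proof.
rewrite (reindex_inj (@ordS_inj Nx)) /=.
by apply: eq_bigr => j _; rewrite /jnext /jprev ordSK.
Qed.

Lemma adj (F G : 'I_Nx -> R) :
  dotT dx (Ah T0 dx rho F) G = dotT dx F (Ahstar T0 dx rho G).
Proof.
rewrite /dotT /Ah /Ahstar.
have E1 : forall j, dx j *
   (Num.sqrt T0 * ((F (jnext j) - F (jprev j)) / (2 * dx j)) - (Einf T0 dx rho j / (2 * Num.sqrt T0)) * F j) * G j
  = Num.sqrt T0 / 2 * (F (jnext j) * G j) - Num.sqrt T0 / 2 * (F (jprev j) * G j)
    - dx j * (Einf T0 dx rho j / (2 * Num.sqrt T0)) * F j * G j.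
  move=> j; have := hdx j; rewrite lt0r => /andP[hj _]; field.
  by rewrite hj sqT0_neq0 ?pnatr_eq0.
have E2 : forall j, dx j * F j *
   (- (Num.sqrt T0 * ((G (jnext j) - G (jprev j)) / (2 * dx j))) - (Einf T0 dx rho j / (2 * Num.sqrt T0)) * G j)
  = Num.sqrt T0 / 2 * (F j * G (jprev j)) - Num.sqrt T0 / 2 * (F j * G (jnext j))
    - dx j * (Einf T0 dx rho j / (2 * Num.sqrt T0)) * F j * G j.
  move=> j; have := hdx j; rewrite lt0r => /andP[hj _]; field.
  by rewrite hj sqT0_neq0 ?pnatr_eq0.
rewrite (eq_bigr _ (fun j _ => E1 j)) (eq_bigr _ (fun j _ => E2 j)).
rewrite !sumrB -!mulr_sumr shiftS shiftP.
congr (_ - _); rewrite -!sumrB; apply: eq_bigr => j _; ring.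
Qed.

Lemma Ah_sqrt j : Ah T0 dx rho (gsqrt rho) j = 0.
Proof.
rewrite /Ah /Einf /gsqrt.
have hs : Num.sqrt (rho j) != 0 by rewrite sqrtr_eq0 -ltNge hrho.
have ht : Num.sqrt T0 != 0 by rewrite sqrtr_eq0 -ltNge hT0.
have hd : dx j != 0 by rewrite gt_eqF // hdx.
have hT : T0 = Num.sqrt T0 ^+ 2 by rewrite sqr_sqrtr // ltW.
rewrite {2}hT; field.
by rewrite hs ht hd.
Qed.

Lemma dotT_ext (F G E E' : 'I_Nx -> R) :
  (forall j, F j = G j) -> (forall j, E j = E' j) -> dotT dx F E = dotT dx G E'.
Proof. by move=> h1 h2; apply: eq_bigr => j _; rewrite h1 h2. Qed.

Lemma dotT_sym (F G : 'I_Nx -> R) : dotT dx F G = dotT dx G F.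
Proof. by apply: eq_bigr => j _; ring. Qed.

Lemma dotZ (c : R) (F E : 'I_Nx -> R) :
  dotT dx (fun j => c * F j) E = c * dotT dx F E.
Proof. rewrite /dotT mulr_sumr; apply: eq_bigr => j _; ring. Qed.

Lemma dotZr (c : R) (F E : 'I_Nx -> R) :
  dotT dx F (fun j => c * E j) = c * dotT dx F E.
Proof. rewrite /dotT mulr_sumr; apply: eq_bigr => j _; ring. Qed.

Lemma dotBr (F G E : 'I_Nx -> R) :
  dotT dx F (fun j => G j - E j) = dotT dx F G - dotT dx F E.
Proof. rewrite /dotT -sumrB; apply: eq_bigr => j _; ring. Qed.

Lemma dot4 (a b c e : R) (F1 F2 F3 F4 E G : 'I_Nx -> R) :
  (forall j, a * F1 j + b * F2 j - c * F3 j + e * F4 j = G j) ->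
  a * dotT dx F1 E + b * dotT dx F2 E - c * dotT dx F3 E + e * dotT dx F4 E
  = dotT dx G E.
Proof.
move=> h; rewrite /dotT !mulr_sumr -big_split -sumrB -big_split.
by apply: eq_bigr => j _ /=; rewrite -h; ring.
Qed.

Lemma Ah_sub (F G : 'I_Nx -> R) j :
  Ah T0 dx rho (gsub F G) j = Ah T0 dx rho F j - Ah T0 dx rho G j.
Proof. rewrite /Ah /gsub; ring. Qed.

Lemma Ah_Dinf F k j : Ah T0 dx rho (gsub F (Dinf rho k)) j = Ah T0 dx rho F j.
Proof.
rewrite Ah_sub /Dinf; case: (k == 0%N); first by rewrite Ah_sqrt subr0.
by rewrite /Ah; ring.
Qed.

Lemma gsub_Dinf F k j : k <> 0%N -> gsub F (Dinf rho k) j = F j.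
Proof. by move=> hk; rewrite /gsub /Dinf; move/eqP/negbTE: hk => ->; rewrite subr0. Qed.

Lemma polar (F G : 'I_Nx -> R) :
  normT2 dx F - normT2 dx G + normT2 dx (gsub F G) = 2 * dotT dx (gsub F G) F.
Proof.
rewrite /normT2 /dotT -sumrB -big_split mulr_sumr; apply: eq_bigr => j _ /=.
rewrite /gsub; ring.
Qed.

Lemma normZ c (F : 'I_Nx -> R) : normT2 dx (gscale c F) = c ^+ 2 * normT2 dx F.
Proof. rewrite /normT2 /dotT mulr_sumr; apply: eq_bigr => j _; rewrite /gscale; ring. Qed.

Lemma normT2_ge0 (F : 'I_Nx -> R) : 0 <= normT2 dx F.
Proof.
apply: sumr_ge0 => j _; rewrite -mulrA; apply: mulr_ge0; first exact: ltW.
rewrite -expr2; exact: sqr_ge0.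
Qed.
End H.

Lemma core (R : rcfType) (Nx NH : nat) (T0 eps tau0 dt : R) (dx rho : 'I_Nx -> R)
  (d p : nat -> 'I_Nx -> R) (w1 w0 : 'I_Nx -> R)
  (hT0 : 0 < T0) (heps : 0 < eps) (htau0 : 0 < tau0) (hdt : 0 < dt)
  (hNH : (1 <= NH)%N)
  (hdx : forall j, 0 < dx j) (hrho : forall j, 0 < rho j)
  (U : forall k, (k <= NH)%N -> forall j,
     eps * ((d k j - p k j) / dt)
     + (if k == 0%N then 0 else Num.sqrt k%:R * Ah T0 dx rho (d k.-1) j)
     - (if k == NH then 0 else Num.sqrt k.+1%:R * Ahstar T0 dx rho (d k.+1) j)
     + (if k == 1%N then Ah T0 dx rho w1 j else 0)
     = - (k%:R / tau0) * d k j)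
  (P1 : forall j, Ahstar T0 dx rho (fun i => (rho i)^-1 * Ah T0 dx rho w1 i) j
     = d 0%N j - Num.sqrt (rho j))
  (P0 : forall j, Ahstar T0 dx rho (fun i => (rho i)^-1 * Ah T0 dx rho w0 i) j
     = p 0%N j - Num.sqrt (rho j)) :
  let e := fun k => gsub (d k) (Dinf rho k) in
  eps / dt * \sum_(0 <= k < NH.+1) dotT dx (gsub (d k) (p k)) (e k)
  + eps / dt * (normT2 dx (gdiv (Ah T0 dx rho w1) (gsqrt rho))
       - dotT dx (gdiv (Ah T0 dx rho w1) (gsqrt rho)) (gdiv (Ah T0 dx rho w0) (gsqrt rho)))
  = - (1 / tau0) * \sum_(1 <= k < NH.+1) k%:R * normT2 dx (d k).
Proof.
move=> e.
have ht : Num.sqrt T0 != 0 by rewrite sqrtr_eq0 -ltNge hT0.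
have hdt0 : dt != 0 by rewrite gt_eqF.
have perk : forall k, (k <= NH)%N ->
  eps / dt * dotT dx (gsub (d k) (p k)) (e k)
  + (if k == 0%N then 0 else Num.sqrt k%:R) * dotT dx (Ah T0 dx rho (d k.-1)) (e k)
  - (if k == NH then 0 else Num.sqrt k.+1%:R) * dotT dx (Ahstar T0 dx rho (d k.+1)) (e k)
  + (if k == 1%N then 1 else 0) * dotT dx (Ah T0 dx rho w1) (e k)
  = - (k%:R / tau0) * dotT dx (d k) (e k).
  move=> k hk; rewrite -(@dotZ _ _ dx (- (k%:R / tau0))); apply: dot4 => j.
  rewrite -(U k hk j) /gsub.
  case: (k == 0%N); case: (k == NH); case: (k == 1%N); by field.
have HS : \sum_(0 <= k < NH.+1)
  (eps / dt * dotT dx (gsub (d k) (p k)) (e k)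
  + (if k == 0%N then 0 else Num.sqrt k%:R) * dotT dx (Ah T0 dx rho (d k.-1)) (e k)
  - (if k == NH then 0 else Num.sqrt k.+1%:R) * dotT dx (Ahstar T0 dx rho (d k.+1)) (e k)
  + (if k == 1%N then 1 else 0) * dotT dx (Ah T0 dx rho w1) (e k))
  = \sum_(0 <= k < NH.+1) (- (k%:R / tau0) * dotT dx (d k) (e k)).
  by apply: eq_big_nat => k /andP[_ hk]; apply: perk; rewrite -ltnS.
rewrite big_split sumrB big_split /= -mulr_sumr in HS.
have Eb : \sum_(0 <= i < NH.+1)
   ((if i == 0%N then 0 else Num.sqrt i%:R) * dotT dx (Ah T0 dx rho (d i.-1)) (e i))
  = \sum_(0 <= i < NH) (Num.sqrt i.+1%:R * dotT dx (Ah T0 dx rho (d i)) (d i.+1)).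
  rewrite big_nat_recl //= mul0r add0r; apply: eq_bigr => i _; congr (_ * _).
  by apply: dotT_ext => j //; exact: gsub_Dinf.
have Ec : \sum_(0 <= i < NH.+1)
   ((if i == NH then 0 else Num.sqrt i.+1%:R) * dotT dx (Ahstar T0 dx rho (d i.+1)) (e i))
  = \sum_(0 <= i < NH) (Num.sqrt i.+1%:R * dotT dx (Ah T0 dx rho (d i)) (d i.+1)).
  rewrite big_nat_recr //= eqxx mul0r addr0; apply: eq_big_nat => i /andP[_ hi].
  rewrite (ltn_eqF hi); congr (_ * _).
  rewrite dotT_sym -(adj _ _ _ _ _ hdx hT0); apply: dotT_ext => j //.
  exact: Ah_Dinf.
have Ed : \sum_(0 <= i < NH.+1)
   ((if i == 1%N then 1 else 0) * dotT dx (Ah T0 dx rho w1) (e i))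
  = dotT dx (Ah T0 dx rho w1) (d 1%N).
  rewrite big_ltn // big_ltn ?ltnS // /= mul0r add0r mul1r.
  rewrite big_nat_cond big1 ?addr0 => [|i /andP[/andP[hi _] _]]; last first.
    by case: i hi => [|[|i]] //= _; rewrite mul0r.
  by apply: dotT_ext => j //; exact: gsub_Dinf.
have Ee : \sum_(0 <= k < NH.+1) (- (k%:R / tau0) * dotT dx (d k) (e k))
  = - (1 / tau0) * \sum_(1 <= k < NH.+1) k%:R * normT2 dx (d k).
  rewrite big_ltn // /= mul0r oppr0 mul0r add0r mulr_sumr.
  apply: eq_big_nat => k /andP[hk _].
  have -> : dotT dx (d k) (e k) = normT2 dx (d k).
    apply: dotT_ext => j //; apply: gsub_Dinf; by case: k hk.
  have ht0 : tau0 != 0 by rewrite gt_eqF.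
  by field.
have Ew : dotT dx (Ah T0 dx rho w1) (d 1%N)
  = eps / dt * (normT2 dx (gdiv (Ah T0 dx rho w1) (gsqrt rho))
       - dotT dx (gdiv (Ah T0 dx rho w1) (gsqrt rho)) (gdiv (Ah T0 dx rho w0) (gsqrt rho))).
  rewrite (adj _ _ _ _ _ hdx hT0).
  have hN : (0%N == NH) = false by apply/negbTE; rewrite eq_sym -lt0n.
  have A1 : forall j, Ahstar T0 dx rho (d 1%N) j =
     eps / dt * (Ahstar T0 dx rho (fun i => (rho i)^-1 * Ah T0 dx rho w1 i) j
                - Ahstar T0 dx rho (fun i => (rho i)^-1 * Ah T0 dx rho w0 i) j).
    move=> j; have := U 0%N (leq0n _) j; rewrite /= hN sqrtr1 mul1r P1 P0.
    move=> h; have -> : Ahstar T0 dx rho (d 1%N) j = eps * ((d 0%N j - p 0%N j) / dt).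
      by move: h; rewrite mul0r oppr0 mul0r !addr0 => /eqP; rewrite subr_eq0 => /eqP <-.
    by field.
  rewrite (@dotT_ext _ _ dx w1 w1 _ (fun j => eps / dt * (Ahstar T0 dx rho (fun i => (rho i)^-1 * Ah T0 dx rho w1 i) j
                - Ahstar T0 dx rho (fun i => (rho i)^-1 * Ah T0 dx rho w0 i) j)) ) //.
  rewrite dotZr dotBr -!(adj _ _ _ _ _ hdx hT0); congr (_ * (_ - _)).
    apply: eq_bigr => j _; rewrite /gdiv /gsqrt.
    have hr := sqr_sqrtr (ltW (hrho j)); have hs : Num.sqrt (rho j) != 0.
      by rewrite sqrtr_eq0 -ltNge hrho.
    by rewrite -{1}hr; field.
  apply: eq_bigr => j _; rewrite /gdiv /gsqrt.
  have hr := sqr_sqrtr (ltW (hrho j)); have hs : Num.sqrt (rho j) != 0.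
    by rewrite sqrtr_eq0 -ltNge hrho.
  by rewrite -{1}hr; field.
rewrite Eb Ec Ed Ee Ew in HS; rewrite -HS; ring.
Qed.

Lemma alg (R : rcfType) (A1 A0 C w1 w0 wd SX Q S eps tau0 dt : R) :
  eps != 0 -> tau0 != 0 -> dt != 0 ->
  A1 - A0 + C = 2 * SX -> w1 - w0 + wd = 2 * Q ->
  eps / dt * SX + eps / dt * Q = - (1 / tau0) * S ->
  (1 / 2 * (A1 + w1) - 1 / 2 * (A0 + w0)) / dt
  + dt * (1 / 2 * (dt^-1 ^+ 2 * C + dt^-1 ^+ 2 * wd))
  = - (1 / (eps * tau0)) * S.
Proof.
move=> he ht hd h1 h2 h3.
have eA : A1 = 2 * SX - C + A0 by rewrite -h1; ring.
have ew : w1 = 2 * Q - wd + w0 by rewrite -h2; ring.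
have eS : S = - tau0 * (eps / dt * SX + eps / dt * Q).
  by rewrite h3; field.
rewrite eA ew eS; field.
by rewrite he ht hd.
Qed.

Theorem proposition3p2 (R : rcfType) (Nx NH : nat)
  (T0 eps tau0 dt : R) (dx rho : 'I_Nx -> R)
  (D : nat -> nat -> 'I_Nx -> R) (om : nat -> 'I_Nx -> R)
  (hT0 : 0 < T0) (heps : 0 < eps) (htau0 : 0 < tau0) (hdt : 0 < dt)
  (hNH : (1 <= NH)%N)
  (hdx : forall j, 0 < dx j) (hrho : forall j, 0 < rho j)
  (* equation for k = 1 (D_{NH+1} = 0 convention if NH = 1) *)
  (eq1 : forall n j,
     eps * ((D n.+1 1%N j - D n 1%N j) / dt)
     + Ah T0 dx rho (D n.+1 0%N) j
     - (if NH == 1%N then 0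
        else Num.sqrt 2%:R * Ahstar T0 dx rho (D n.+1 2%N) j)
     + Ah T0 dx rho (om n.+1) j
     = - (1 / tau0) * D n.+1 1%N j)
  (* equations for k in {0..NH} \ {1}, with D_{-1} = D_{NH+1} = 0 *)
  (eqk : forall n (k : nat), (k <= NH)%N -> k <> 1%N -> forall j,
     eps * ((D n.+1 k j - D n k j) / dt)
     + (if k == 0%N then 0
        else Num.sqrt k%:R * Ah T0 dx rho (D n.+1 k.-1) j)
     - (if k == NH then 0
        else Num.sqrt k.+1%:R * Ahstar T0 dx rho (D n.+1 k.+1) j)
     = - (k%:R / tau0) * D n.+1 k j)
  (* Poisson-type equation for omega, for all n >= 0 *)
  (pois : forall n j,
     Ahstar T0 dx rho (fun i => (rho i)^-1 * Ah T0 dx rho (om n) i) j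
     = D n 0%N j - Num.sqrt (rho j))
  (mean0 : forall n,
     \sum_(j < Nx) dx j * om n j * (Num.sqrt (rho j))^-1 = 0) :
  forall n : nat,
    (energy T0 NH dx rho D om n.+1 - energy T0 NH dx rho D om n) / dt
    + dt * Rh T0 dt NH dx rho D om n
    = - (1 / (eps * tau0)) *
        \sum_(1 <= k < NH.+1) k%:R * normT2 dx (D n.+1 k)
    /\ 0 <= Rh T0 dt NH dx rho D om n.
Proof.

move=> n.
have ht : Num.sqrt T0 != 0 by rewrite sqrtr_eq0 -ltNge hT0.
have hdt0 : dt != 0 by rewrite gt_eqF.
split; last first.
  rewrite /Rh; apply: mulr_ge0; first by rewrite ler_pdivlMr // mul0r.
  apply: addr_ge0; last exact: normT2_ge0.
  by apply: sumr_ge0 => k _; exact: normT2_ge0.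
have U : forall k, (k <= NH)%N -> forall j,
     eps * ((D n.+1 k j - D n k j) / dt)
     + (if k == 0%N then 0 else Num.sqrt k%:R * Ah T0 dx rho (D n.+1 k.-1) j)
     - (if k == NH then 0 else Num.sqrt k.+1%:R * Ahstar T0 dx rho (D n.+1 k.+1) j)
     + (if k == 1%N then Ah T0 dx rho (om n.+1) j else 0)
     = - (k%:R / tau0) * D n.+1 k j.
  move=> k hk j; case: (k =P 1%N) => [->|h1].
    rewrite /= sqrtr1 mul1r (eq_sym 1%N NH) (_ : (1%:R : R) = 1) //; exact: eq1.
  rewrite addr0; exact: eqk.
have C := @core _ _ _ _ _ _ _ _ _ _ _ _ _ hT0 heps htau0 hdt hNH hdx hrho U (pois n.+1) (pois n).
rewrite /= !big_mkord in C.
rewrite /energy /Rh.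
have E1 : \sum_(k < NH.+1) normT2 dx (gscale dt^-1 (gsub (D n.+1 k) (D n k)))
   = dt^-1 ^+ 2 * \sum_(k < NH.+1) normT2 dx (gsub (D n.+1 k) (D n k)).
  by rewrite mulr_sumr; apply: eq_bigr => k _; exact: normZ.
have E2 : normT2 dx (gdiv (Ah T0 dx rho (gsub (om n.+1) (om n))) (gscale dt (gsqrt rho)))
   = dt^-1 ^+ 2 * normT2 dx (gsub (gdiv (Ah T0 dx rho (om n.+1)) (gsqrt rho))
                                   (gdiv (Ah T0 dx rho (om n)) (gsqrt rho))).
  rewrite /normT2 /dotT mulr_sumr; apply: eq_bigr => j _.
  rewrite /gdiv /gsub /gscale /gsqrt Ah_sub.
  have hs : Num.sqrt (rho j) != 0 by rewrite sqrtr_eq0 -ltNge hrho.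
  by field; rewrite hs hdt0.
rewrite E1 E2.
apply: (@alg _ _ _ _ _ _ _ _ _ _ _ _ _ _ _ _ _ _ C).
- by rewrite gt_eqF.
- by rewrite gt_eqF.
- by [].
- rewrite /normT2 /dotT -sumrB -big_split mulr_sumr; apply: eq_bigr => k _ /=.
  rewrite -sumrB -big_split mulr_sumr; apply: eq_bigr => j _ /=.
  rewrite /gsub; ring.
- rewrite /normT2 /dotT -sumrB -big_split -sumrB mulr_sumr; apply: eq_bigr => j _ /=.
  rewrite /gsub; ring.
Qed.
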